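(* Let $m\ge1$ and $[m]=\{1<2<\dots<m\}$. For every poset ideal $\mathcal{J}\subseteq\mathrm{Hom}([m],\mathbb{N})$ the projected letterplace ideal $L^{p_1}(\mathcal{J},[m])$ is a strongly stable ideal of $k[x_1,\dots,x_m]$, and $\mathcal{J}\mapsto L^{p_1}(\mathcal{J},[m])$ is a one-to-one correspondence between poset ideals of $\mathrm{Hom}([m],\mathbb{N})$ and strongly stable ideals of $k[x_1,\dots,x_m]$.
   Context: $\mathbb{N}=\{0,1,2,\dots\}$; $\mathrm{Hom}([m],\mathbb{N})$ is the set of weakly increasing maps $[m]\to\mathbb{N}$ ordered pointwise; $\mathcal{J}^c$ denotes the complement of $\mathcal{J}$. The ascent of $\psi$ is $\Lambda\psi=\{(a,i)\in[m]\times\mathbb{N}:\psi(q)\le i<\psi(a)\ \forall q<a\}$. $k$ is a field; the letterplace ideal $L(\mathcal{J},[m])\subseteq k[x_{a,i}:(a,i)\in[m]\times\mathbb{N}]$ is generated by $\prod_{(a,i)\in\Lambda\psi}x_{a,i}$ for $\psi\in\mathcal{J}^c$. $L^{p_1}(\mathcal{J},[m])$ is the ideal of $k[x_1,\dots,x_m]$ generated by the images of these generators under $x_{a,i}\mapsto x_a$. A monomial ideal $I$ is strongly stable if for every monomial $u$ and $i<j$, $x_ju\in I$ implies $x_iu\in I$. *)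

(* Defs.v *)
From HB Require Import structures.
From mathcomp Require Import all_boot all_order all_algebra.
From mathcomp Require Import mpoly.
Set Implicit Arguments. Unset Strict Implicit. Unset Printing Implicit Defensive.
Import GRing.Theory.
Local Open Scope ring_scope.

(* [m] = {1<...<m} is modelled by 'I_m = {0<...<m-1} with its natural order. *)

Definition is_hom (m : nat) (psi : 'I_m -> nat) : Prop :=
  forall a b : 'I_m, (a <= b)%N -> (psi a <= psi b)%N.

Definition hom_le (m : nat) (phi psi : 'I_m -> nat) : Prop :=
  forall a, (phi a <= psi a)%N.

Definition poset_ideal (m : nat) (J : ('I_m -> nat) -> Prop) : Prop :=
  (forall psi, J psi -> is_hom psi) /\
  (forall phi psi, is_hom phi -> J psi -> hom_le phi psi -> J phi).

Definition compl_hom (m : nat) (J : ('I_m -> nat) -> Prop) (psi : 'I_m -> nat) : Prop :=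
  is_hom psi /\ ~ J psi.

Definition ascent (m : nat) (psi : 'I_m -> nat) (a : 'I_m) (i : nat) : bool :=
  [forall q : 'I_m, (q < a)%N ==> (psi q <= i)%N] && (i < psi a)%N.

Definition ascent_count (m : nat) (psi : 'I_m -> nat) (a : 'I_m) : nat :=
  \sum_(i < psi a) ascent psi a i.

(* image of prod_{(a,i) in Lambda psi} x_{a,i} under x_{a,i} |-> x_a *)
Definition proj_gen (k : fieldType) (m : nat) (psi : 'I_m -> nat) : {mpoly k[m]} :=
  \prod_(a < m) ('X_a) ^+ (ascent_count psi a).

Definition is_ideal (k : fieldType) (m : nat) (I : {mpoly k[m]} -> Prop) : Prop :=
  I 0 /\ (forall p q, I p -> I q -> I (p + q)) /\ (forall r p, I p -> I (r * p)).

Definition ideal_gen (k : fieldType) (m : nat) (S : {mpoly k[m]} -> Prop)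
  (p : {mpoly k[m]}) : Prop :=
  forall I, is_ideal I -> (forall q, S q -> I q) -> I p.

Definition Lp1 (k : fieldType) (m : nat) (J : ('I_m -> nat) -> Prop) : {mpoly k[m]} -> Prop :=
  ideal_gen (fun q => exists psi, compl_hom J psi /\ q = proj_gen k psi).

Definition monomial_ideal (k : fieldType) (m : nat) (I : {mpoly k[m]} -> Prop) : Prop :=
  exists M : 'X_{1..m} -> Prop,
    forall p, I p <-> ideal_gen (fun q => exists mu, M mu /\ q = 'X_[mu]) p.

Definition strongly_stable (k : fieldType) (m : nat) (I : {mpoly k[m]} -> Prop) : Prop :=
  monomial_ideal I /\
  forall (u : 'X_{1..m}) (i j : 'I_m), (i < j)%N ->
    I ('X_j * 'X_[u]) -> I ('X_i * 'X_[u]).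

Arguments Lp1 k {m} J _.

(* Main.v *)
Require Import Defs.
From HB Require Import structures.
From mathcomp Require Import all_boot all_order all_algebra.
From mathcomp Require Import mpoly.
From mathcomp Require Import zify.
From Stdlib Require Import FunctionalExtensionality Classical.
Set Implicit Arguments. Unset Strict Implicit. Unset Printing Implicit Defensive.
Import GRing.Theory.
Local Open Scope ring_scope.
Section Gen.
Variables (k : fieldType) (m : nat).

Definition G (M : 'X_{1..m} -> Prop) : {mpoly k[m]} -> Prop :=
  ideal_gen (fun q => exists mu, M mu /\ q = 'X_[mu]).

Lemma ideal_gen_ideal (S : {mpoly k[m]} -> Prop) : is_ideal (ideal_gen S).
Proof.
split; first by move=> I [] .
split.
  by move=> p q hp hq I hI hS; case: (hI) => _ [hD _]; apply: hD; [apply: hp|apply: hq].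
by move=> r p hp I hI hS; case: (hI) => _ [_ hM]; apply: hM; apply: hp.
Qed.

Lemma ideal_gen_gen (S : {mpoly k[m]} -> Prop) q : S q -> ideal_gen S q.
Proof. by move=> hq I _ hS; apply: hS. Qed.

Lemma ideal_gen_ext (S1 S2 : {mpoly k[m]} -> Prop) :
  (forall q, S1 q <-> S2 q) -> forall p, ideal_gen S1 p <-> ideal_gen S2 p.
Proof.
move=> h p; split=> hp I hI hS; apply: hp => // q /h; exact: hS.
Qed.

Lemma G_X (M : 'X_{1..m} -> Prop) u :
  G M 'X_[u] <-> exists v, M v /\ (v <= u)%MM.
Proof.
split.
  move=> h.
  pose P := fun p : {mpoly k[m]} => forall mu, mu \in msupp p -> exists v, M v /\ (v <= mu)%MM.
  have hP : is_ideal P.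
    split; first by move=> mu; rewrite msupp0.
    split.
      move=> p q hp hq mu /msuppD_le; rewrite mem_cat => /orP [/hp|/hq] //.
    move=> r p hp mu /msuppM_le /allpairsP [[a b] [ha hb /= ->]].
    have [v [hv hvb]] := hp b hb; exists v; split => //.
    apply: lepm_trans hvb _; rewrite addmC; exact: lem_addr.
  have := h P hP.
  have hg : forall q, (exists mu, M mu /\ q = 'X_[mu]) -> P q.
    move=> q [mu [hmu ->]] nu; rewrite msuppX inE => /eqP ->.
    by exists mu; split => //; apply: lepm_refl.
  move=> /(_ hg) /(_ u); rewrite msuppX inE eqxx; exact.
case=> v [hv hvu] I hI hS.
have -> : 'X_[u] = 'X_[u - v] * 'X_[v] :> {mpoly k[m]} by rewrite -mpolyXD submK.
case: hI => _ [_ hM]; apply: hM; apply: hS; by exists v.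
Qed.

End Gen.
Local Close Scope ring_scope.
Section Comb.
Variable m : nat.

Definition ps (u : 'X_{1..m}) (a : 'I_m) : nat := \sum_(b < m | (b <= a)%N) u b.
Definition dif (psi : 'I_m -> nat) : 'X_{1..m} := [multinom ascent_count psi a | a < m].
Definition prev (psi : 'I_m -> nat) (a : 'I_m) : nat := \max_(q < m | (q < a)%N) psi q.

Lemma sum_ind n c : \sum_(i < n) (c <= i) = n - c.
Proof.
elim: n => [|n IH]; first by rewrite big_ord0.
rewrite big_ord_recr /= IH; case: leqP => h /=; lia.
Qed.

Lemma ascent_countE psi a : ascent_count psi a = psi a - prev psi a.
Proof.
rewrite /ascent_count -sum_ind; apply: eq_bigr => i _.
rewrite /ascent ltn_ord andbT; congr (nat_of_bool _).
apply/forallP/bigmax_leqP => h q.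
  by move=> hq; move: (h q); rewrite hq.
by apply/implyP => hq; apply: h.
Qed.

Lemma prev_le psi a : is_hom psi -> prev psi a <= psi a.
Proof. by move=> h; apply/bigmax_leqP => q hq; apply: h; apply: ltnW. Qed.

Lemma ps_hom u : is_hom (ps u).
Proof.
move=> a b hab; rewrite /ps !(big_mkcond (fun i : 'I_m => (i <= _)%N)).
apply: leq_sum => i _; case: ifP => h1; case: ifP => h2 //; lia.
Qed.

Lemma ps_le u v : (v <= u)%MM -> hom_le (ps v) (ps u).
Proof. by move=> /mnm_lepP h a; apply: leq_sum => i _. Qed.

Lemma psD u i a : ps (u + U_(i))%MM a = ps u a + (i <= a).
Proof.
rewrite /ps; under eq_bigr => b _ do rewrite mnmDE mnm1E.
rewrite big_split /=; congr (_ + _).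
rewrite (big_mkcond (fun b : 'I_m => (b <= a)%N)) (bigD1 i) //= big1 ?addn0.
  by rewrite eqxx; case: ifP.
by move=> b hb; rewrite eq_sym (negbTE hb); case: ifP.
Qed.

Lemma ps_borel u (i j : 'I_m) : (i < j)%N -> hom_le (ps (u + U_(j))%MM) (ps (u + U_(i))%MM).
Proof. move=> hij a; rewrite !psD; case: (leqP j a) => h; case: (leqP i a) => h' //=; lia. Qed.

Lemma prev_ps u a : prev (ps u) a = ps u a - u a.
Proof.
have E : ps u a = \sum_(b < m | (b < a)%N) u b + u a.
  rewrite /ps (bigD1 a) //= addnC; congr (_ + _); apply: eq_bigl => b.
  by rewrite ltn_neqAle andbC -val_eqE.
rewrite E addnK; apply/eqP; rewrite eqn_leq; apply/andP; split.
  apply/bigmax_leqP => q hq; rewrite /ps big_mkcond [X in _ <= X]big_mkcond.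
  apply: leq_sum => b _; case: ifP => h1; case: ifP => h2 //; lia.
case: (posnP a) => ha.
  by rewrite big_pred0 // => b; rewrite ha.
have hq : (a.-1 < m)%N by have := ltn_ord a; lia.
apply: (leq_trans _ (leq_bigmax_cond (Ordinal hq) _)) => /=; last by lia.
rewrite /ps; apply: eq_leq; apply: eq_bigl => b /=; lia.
Qed.

Lemma dif_ps u : dif (ps u) = u.
Proof.
apply/mnmP => a; rewrite /dif mnmE ascent_countE prev_ps.
have : u a <= ps u a by rewrite /ps (bigD1 a) //=; apply: leq_addr.
lia.
Qed.

Lemma hom_dif_inj phi psi : is_hom phi -> is_hom psi -> dif phi = dif psi -> phi = psi.
Proof.
move=> hphi hpsi hd; apply: functional_extensionality.
suff H : forall n (a : 'I_m), (a < n)%N -> phi a = psi a by move=> a; apply: (H a.+1).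
elim=> [//|n IH] a ha.
have hp : prev phi a = prev psi a.
  by apply: eq_bigr => q hq; apply: IH; lia.
have := congr1 (fun u : 'X_{1..m} => u a) hd; rewrite /dif !mnmE !ascent_countE hp.
have := prev_le a hphi; have := prev_le a hpsi; rewrite hp; lia.
Qed.

Lemma ps_dif psi : is_hom psi -> ps (dif psi) = psi.
Proof. move=> h; apply: hom_dif_inj => //; [exact: ps_hom | exact: dif_ps]. Qed.

End Comb.
Section Chain.
Variables (k : fieldType) (m : nat).

Definition Dm (u u' : 'X_{1..m}) := \sum_(b < m) (ps u' b - ps u b).

Lemma step (u u' u'' : 'X_{1..m}) a :
  (forall b, ps u'' b = ps u b + (b == a)) -> ps u a < ps u' a -> hom_le (ps u) (ps u') ->
  hom_le (ps u'') (ps u') /\ Dm u'' u' < Dm u u'.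
Proof.
move=> h ha hle; split.
  move=> b; rewrite h; case: eqP => [->|_] /=; [lia| rewrite addn0; exact: hle].
rewrite /Dm (bigD1 a) //= [X in _ < X](bigD1 a) //= h eqxx.
have -> : \sum_(i < m | i != a) (ps u' i - ps u'' i) = \sum_(i < m | i != a) (ps u' i - ps u i).
  by apply: eq_bigr => b hb; rewrite h (negbTE hb) addn0.
move: ha; rewrite addn1; move: (ps u a) (ps u' a) => x y; set S := \sum_(i < m | _) _; lia.
Qed.

Lemma chain (I : {mpoly k[m]} -> Prop) : is_ideal I ->
  (forall u (i j : 'I_m), (i < j)%N -> I ('X_j * 'X_[u])%R -> I ('X_i * 'X_[u])%R) ->
  forall u u', hom_le (ps u) (ps u') -> I 'X_[u] -> I 'X_[u'].
Proof.
move=> [_ [_ hM]] hB u u'.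
move: {2}(Dm u u') (leqnn (Dm u u')) => n; elim: n u => [|n IH] u hD hle hu.
  suff -> : u' = u by [].
  rewrite -(dif_ps u) -(dif_ps u'); congr dif; apply: functional_extensionality => b.
  apply/eqP; rewrite eqn_leq hle andbT.
  move: hD; rewrite leqn0 sum_nat_eq0 => /forallP /(_ b) /implyP /(_ isT); lia.
case: (boolP [exists b, ps u b < ps u' b]) => hex; last first.
  suff -> : u' = u by [].
  rewrite -(dif_ps u) -(dif_ps u'); congr dif; apply: functional_extensionality => b.
  apply/eqP; rewrite eqn_leq hle andbT.
  by move/existsPn: hex => /(_ b); rewrite -leqNgt.
case/existsP: hex => b0 hb0.
case: (@arg_maxnP _ b0 (fun b => ps u b < ps u' b) (fun b : 'I_m => b : nat) hb0) => a ha hmax.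
have hstep : forall u'', (forall b, ps u'' b = ps u b + (b == a)) -> I 'X_[u''] -> I 'X_[u'].
  move=> u'' e hu''; have [hle'' hD''] := step e ha hle.
  by apply: (IH u'') => //; lia.
case: (ltnP a.+1 m) => ham.
  pose a1 := Ordinal ham.
  have e1 : ps u a1 = ps u a + u a1.
    rewrite /ps (bigD1 a1) //= addnC; congr (_ + _); apply: eq_bigl => b /=.
    by rewrite -val_eqE /=; lia.
  have hnot : ~~ (ps u a1 < ps u' a1).
    by apply/negP => /hmax /=; lia.
  have hpos : 0 < u a1.
    have := @ps_hom m u' a a1 (leqnSn a).
    move: hnot; rewrite -leqNgt e1; lia.
  pose w := (u - U_(a1))%MM.
  have ew : u = (w + U_(a1))%MM.
    by apply/mnmP => b; rewrite mnmDE mnmBE mnm1E; case: eqP => [<-|]; lia.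
  apply: (hstep (w + U_(a))%MM).
    move=> b; rewrite ew !psD -val_eqE /=.
    by case: (leqP a b) => h1; case: (leqP a.+1 b) => h2; case: eqP => h3 /=; lia.
  rewrite mpolyXD mulrC; apply: (hB w a a1 (ltnSn a)).
  by rewrite ew mpolyXD mulrC in hu.
apply: (hstep (u + U_(a))%MM).
  move=> b; rewrite psD; congr (_ + _); have := ltn_ord b.
  by case: eqP => [->|/eqP]; rewrite ?leqnn // -val_eqE /=; lia.
by rewrite mpolyXD mulrC; apply: hM.
Qed.

End Chain.
Section Main.
Variables (k : fieldType) (m : nat).

Definition Mof (J : ('I_m -> nat) -> Prop) (mu : 'X_{1..m}) := compl_hom J (ps mu).

Lemma proj_genE (psi : 'I_m -> nat) : proj_gen k psi = 'X_[dif psi].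
Proof. by rewrite /proj_gen mpolyXE_id; apply: eq_bigr => a _; rewrite mnmE. Qed.

Lemma Lp1_G J p : Lp1 k J p <-> @G k m (Mof J) p.
Proof.
apply: ideal_gen_ext => q; split.
  case=> psi [[hh hn] ->]; exists (dif psi); rewrite proj_genE /Mof ps_dif //.
case=> mu [hmu ->]; exists (ps mu); split => //; by rewrite proj_genE dif_ps.
Qed.

Lemma G_gen M mu : M mu -> @G k m M 'X_[mu].
Proof. by move=> h; apply: ideal_gen_gen; exists mu. Qed.

Theorem main (hm : (0 < m)%N) :
  (forall J : ('I_m -> nat) -> Prop, poset_ideal J -> strongly_stable (Lp1 k J)) /\
  (forall J1 J2 : ('I_m -> nat) -> Prop, poset_ideal J1 -> poset_ideal J2 ->
     (forall p, Lp1 k J1 p <-> Lp1 k J2 p) -> (forall psi, J1 psi <-> J2 psi)) /\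
  (forall I : {mpoly k[m]} -> Prop, strongly_stable I ->
     exists J : ('I_m -> nat) -> Prop, poset_ideal J /\ (forall p, Lp1 k J p <-> I p)).
Proof.
split.
  move=> J [hJh hJd]; split; first by exists (Mof J) => p; exact: Lp1_G.
  move=> u i j hij; rewrite !Lp1_G -!mpolyXD => /G_X [v [[hv hnv] hvu]].
  apply: G_gen; split; first exact: ps_hom.
  move=> hJ; apply: hnv; apply: (hJd _ _ hv hJ) => a.
  apply: leq_trans (ps_le hvu a) _.
  rewrite addmC [(_ + u)%MM]addmC; exact: ps_borel.
split.
  have key : forall J1 J2 : ('I_m -> nat) -> Prop, poset_ideal J1 ->
      (forall p, Lp1 k J1 p <-> Lp1 k J2 p) -> forall psi, J1 psi -> J2 psi.
    move=> J1 J2 [h1h h1d] hL psi hJ1; apply: NNPP => hn2.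
    have hh := h1h _ hJ1.
    have : Lp1 k J2 'X_[dif psi].
      by rewrite Lp1_G; apply: G_gen; rewrite /Mof ps_dif.
    rewrite -hL Lp1_G => /G_X [v [[hv hnv] hvu]].
    apply: hnv; apply: (h1d _ _ hv hJ1) => a.
    by move: (ps_le hvu a); rewrite ps_dif.
  move=> J1 J2 h1 h2 hL psi; split; first exact: key.
  by apply: key => // p; symmetry.
move=> I [[M0 hI] hB].
have hId : is_ideal I.
  have [h0 [hD hM]] := @ideal_gen_ideal k m (fun q => exists mu, M0 mu /\ q = 'X_[mu]).
  split; first by apply/hI.
  split; first by move=> p q /hI hp /hI hq; apply/hI; apply: hD.
  by move=> r p /hI hp; apply/hI; apply: hM.
exists (fun psi => is_hom psi /\ ~ I 'X_[dif psi]); split.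
  split; first by move=> psi [].
  move=> phi psi hphi [hpsi hn] hle; split => // hI'; apply: hn.
  apply: (chain hId hB _ hI'); by rewrite !ps_dif.
move=> p; rewrite Lp1_G; split.
  move=> hp; apply: hp => // q [mu [[hmh hmn] ->]].
  apply: NNPP => hn; apply: hmn; split => //; by rewrite dif_ps.
move=> /hI hp; apply: hp; first exact: ideal_gen_ideal.
move=> q [mu [hmu ->]]; apply: G_gen; split; first exact: ps_hom.
case=> _; rewrite dif_ps; apply; apply/hI; apply: ideal_gen_gen; by exists mu.
Qed.

End Main.
Unset Implicit Arguments.

Theorem theorem6p1 (k : fieldType) (m : nat) (hm : (0 < m)%N) :
  (forall J : ('I_m -> nat) -> Prop, poset_ideal J -> strongly_stable (Lp1 k J)) /\
  (forall J1 J2 : ('I_m -> nat) -> Prop, poset_ideal J1 -> poset_ideal J2 ->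
     (forall p, Lp1 k J1 p <-> Lp1 k J2 p) -> (forall psi, J1 psi <-> J2 psi)) /\
  (forall I : {mpoly k[m]} -> Prop, strongly_stable I ->
     exists J : ('I_m -> nat) -> Prop, poset_ideal J /\ (forall p, Lp1 k J p <-> I p)).
Proof. exact: (@main k m hm). Qed.
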